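(* Let $\lambda>0$ and let $\Sigma\in\mathbb{R}^{d\times d}$ be symmetric positive definite with simple spectrum $\sigma_1>\sigma_2>\cdots>\sigma_d>0$ and associated unit eigenvectors $u_1,\dots,u_d$. Define $\mathcal{R}_{\mathrm{soft},\infty}:\mathbb{R}^d\to\mathbb{R}$ by \[ \mathcal{R}_{\mathrm{soft},\infty}(\mu)=\operatorname{tr}(\Sigma)-2\lambda\,\mu^\top\Sigma^2\mu+\lambda^2(\mu^\top\Sigma\mu)(\mu^\top\Sigma^2\mu). \] Then all critical points of $\mathcal{R}_{\mathrm{soft},\infty}$ are nondegenerate, and \[ \mathrm{crit}(\mathcal{R}_{\mathrm{soft},\infty})=\{0\}\cup\Big\{\pm\tfrac{1}{\sqrt{\lambda\sigma_j}}u_j:\ j=1,\dots,d\Big\}. \] Moreover: (1) $0$ is a strict local maximum; (2) for $j=2,\dots,d$, the points $\pm\frac{1}{\sqrt{\lambda\sigma_j}}u_j$ are strict saddles; (3) the points $\pm\frac{1}{\sqrt{\lambda\sigma_1}}u_1$ are global minimizers of $\mathcal{R}_{\mathrm{soft},\infty}$.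
   Context: $\mathcal{R}_{\mathrm{soft},\infty}(\mu)$ equals $\mathbb{E}\big[\|X-\lambda\Sigma\mu\mu^\top X\|^2\big]$ for $X\sim\mathcal{N}(0,\Sigma)$, the population risk of the infinite-prompt limit of a rank-one softmax attention layer. A critical point is nondegenerate if the Hessian there is invertible; a strict saddle is a critical point whose Hessian has a negative eigenvalue and which is not a local minimum. *)

(* Defs.v *)
From HB Require Import structures.
From mathcomp Require Import all_boot all_order all_algebra.
From mathcomp Require Import all_classical all_reals all_analysis.
Set Implicit Arguments. Unset Strict Implicit. Unset Printing Implicit Defensive.
Import Order.TTheory GRing.Theory Num.Theory.
Import numFieldNormedType.Exports.
Local Open Scope ring_scope.

Definition qf {R : pzRingType} {d : nat} (A : 'M[R]_d) (x : 'cV[R]_d) : R :=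
  (x^T *m A *m x) 0 0.

Definition R_soft {R : realType} {d : nat} (lam : R) (Sigma : 'M[R]_d)
  (mu : 'cV[R]_d) : R :=
  \tr Sigma - 2 * lam * qf (Sigma *m Sigma) mu
  + lam ^+ 2 * (qf Sigma mu * qf (Sigma *m Sigma) mu).

Definition e_ {R : realType} {d : nat} (i : 'I_d) : 'cV[R]_d := delta_mx i 0.

Definition partial {R : realType} {d : nat} (i : 'I_d)
  (f : 'cV[R]_d -> R) (x : 'cV[R]_d) : R := 'D_(e_ i) f x.

Definition grad {R : realType} {d : nat} (f : 'cV[R]_d -> R) (x : 'cV[R]_d)
  : 'cV[R]_d := \col_i partial i f x.

Definition hessian {R : realType} {d : nat} (f : 'cV[R]_d -> R) (x : 'cV[R]_d)
  : 'M[R]_d := \matrix_(i, j) partial i (partial j f) x.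

Definition critical_point {R : realType} {d : nat} (f : 'cV[R]_d -> R)
  (x : 'cV[R]_d) : Prop := grad f x = 0.

Definition nondegenerate_crit {R : realType} {d : nat} (f : 'cV[R]_d -> R)
  (x : 'cV[R]_d) : Prop := critical_point f x /\ hessian f x \in unitmx.

Definition local_min {R : realType} {d : nat} (f : 'cV[R]_d -> R)
  (x : 'cV[R]_d) : Prop := \forall y \near x, f x <= f y.

Definition strict_local_max {R : realType} {d : nat} (f : 'cV[R]_d -> R)
  (x : 'cV[R]_d) : Prop := \forall y \near x, y != x -> f y < f x.

Definition strict_saddle {R : realType} {d : nat} (f : 'cV[R]_d -> R)
  (x : 'cV[R]_d) : Prop :=
  [/\ critical_point f x,
      (exists a : R, a < 0 /\ eigenvalue (hessian f x) a)
    & ~ local_min f x].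

Definition global_min {R : realType} {d : nat} (f : 'cV[R]_d -> R)
  (x : 'cV[R]_d) : Prop := forall y, f x <= f y.

(* Main.v *)
Require Import Defs.
From HB Require Import structures.
From mathcomp Require Import all_boot all_order all_algebra.
From mathcomp Require Import all_classical all_reals all_analysis.
From mathcomp Require Import ring lra.
Import Order.TTheory GRing.Theory Num.Theory.
Import numFieldNormedType.Exports.
Local Open Scope ring_scope.
Local Open Scope classical_set_scope.

Lemma derive_cubic (R : realType) (V : normedModType R) (f : V -> R) (x v : V)
  (q0 q1 q2 q3 : R) :
  (forall h, f (h *: v + x) - f x = h * (q0 + h * (q1 + h * (q2 + h * q3)))) ->
  'D_v f x = q0.
Proof.
move=> H; rewrite /derive; apply: cvg_lim => //.
set g := fun h : R => q0 + h * (q1 + h * (q2 + h * q3)).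
apply: (@cvg_trans _ (g @ 0^')).
  apply: near_eq_cvg; near=> h.
  have hn : h != 0 by near: h; exact: (@nbhs_dnbhs_neq R 0).
  by rewrite /= H /g /GRing.scale /= mulrA mulVf // mul1r.
have -> : q0 = g 0 by rewrite /g mul0r addr0.
apply: cvg_within_filter.
apply: cvgD; first exact: cvg_cst.
apply: cvgM; first exact: cvg_id.
apply: cvgD; first exact: cvg_cst.
apply: cvgM; first exact: cvg_id.
apply: cvgD; first exact: cvg_cst.
apply: cvgM; first exact: cvg_id.
exact: cvg_cst.
Unshelve. all: by end_near. Qed.

Arguments derive_cubic {R V f x v q0 q1 q2 q3}.

Section Mat.
Variables (R : realType) (d : nat).
Implicit Types (M : 'M[R]_d) (x y v : 'cV[R]_d).

Definition bf M x y : R := (x^T *m M *m y) 0 0.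

Lemma bf_sym M x y : M^T = M -> bf M x y = bf M y x.
Proof.
move=> HM; rewrite /bf.
have -> : (x^T *m M *m y) 0 0 = (x^T *m M *m y)^T 0 0 by rewrite [RHS]mxE.
by rewrite !trmx_mul trmxK HM mulmxA.
Qed.

Lemma bfDl M h v x y : bf M (h *: v + x) y = h * bf M v y + bf M x y.
Proof.
by rewrite /bf linearD /= linearZ /= !mulmxDl -!scalemxAl [LHS]mxE [X in X + _ = _]mxE.
Qed.

Lemma bfDr M h v x y : bf M x (h *: v + y) = h * bf M x v + bf M x y.
Proof.
by rewrite /bf mulmxDr -scalemxAr [LHS]mxE [X in X + _ = _]mxE.
Qed.

Lemma qf_shift M h v x : M^T = M ->
  qf M (h *: v + x) = h ^+ 2 * qf M v + 2 * h * bf M v x + qf M x.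
Proof.
move=> HM; rewrite /qf -!/(bf _ _ _) bfDl !bfDr (bf_sym _ x v HM).
ring.
Qed.

Lemma bf_e M i x : bf M (e_ i) x = (M *m x) i 0.
Proof.
by rewrite /bf /e_ trmx_delta -mulmxA -rowE mxE.
Qed.

Lemma mulmx_shift M h v x j :
  (M *m (h *: v + x)) j 0 = h * (M *m v) j 0 + (M *m x) j 0.
Proof. by rewrite mulmxDr -scalemxAr [LHS]mxE [X in X + _ = _]mxE. Qed.

Lemma Me M i j : (M *m e_ i) j 0 = M j i.
Proof. by rewrite /e_ -colE mxE. Qed.

Lemma addE m n (A B : 'M[R]_(m, n)) i j : (A + B) i j = A i j + B i j.
Proof. by rewrite mxE. Qed.

Lemma scaleE m n c (A : 'M[R]_(m, n)) i j : (c *: A) i j = c * A i j.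
Proof. by rewrite mxE. Qed.

Lemma outer_entry (y z : 'cV[R]_d) i j : (y *m z^T) i j = y i 0 * z j 0.
Proof. by rewrite mxE big_ord1 mxE. Qed.

End Mat.
Arguments bf {R d}.

Section F.
Variables (R : realType) (d : nat) (lam : R) (Sigma : 'M[R]_d).
Hypothesis HS : Sigma^T = Sigma.
Local Notation S2 := (Sigma *m Sigma).
Local Notation f := (R_soft lam Sigma).
Local Notation a_ x := (qf S2 x).
Local Notation b_ x := (qf Sigma x).

Lemma S2sym : S2^T = S2.
Proof. by rewrite trmx_mul HS. Qed.

Lemma f_shift h v x :
  f (h *: v + x) - f x =
  h * ((- 4 * lam * bf S2 v x + lam^+2 * (2 * b_ x * bf S2 v x + 2 * bf Sigma v x * a_ x))
  + h * ((- 2 * lam * qf S2 v + lam^+2 * (b_ x * qf S2 v + 4 * bf Sigma v x * bf S2 v x + qf Sigma v * a_ x))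
  + h * (lam^+2 * (2 * bf Sigma v x * qf S2 v + 2 * qf Sigma v * bf S2 v x)
  + h * (lam^+2 * (qf Sigma v * qf S2 v))))).
Proof.
rewrite /R_soft !qf_shift //; last exact: S2sym.
ring.
Qed.

Definition gv (x : 'cV[R]_d) : 'cV[R]_d :=
  (- 4 * lam + 2 * lam^+2 * b_ x) *: (S2 *m x) + (2 * lam^+2 * a_ x) *: (Sigma *m x).

Lemma gvE x j : gv x j 0 =
  (- 4 * lam + 2 * lam^+2 * b_ x) * (S2 *m x) j 0 + (2 * lam^+2 * a_ x) * (Sigma *m x) j 0.
Proof. by rewrite /gv !mxE. Qed.

Lemma partial_f j x : partial j f x = gv x j 0.
Proof.
rewrite /partial (derive_cubic (fun h => f_shift h (e_ j) x)) gvE !bf_e.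
ring.
Qed.

Lemma grad_f x : grad f x = gv x.
Proof.
apply/matrixP => i k; rewrite mxE (ord1 k) partial_f.
by [].
Qed.

Lemma Gj_shift h v x j :
  gv (h *: v + x) j 0 - gv x j 0 =
  h * (((- 4 * lam + 2 * lam^+2 * b_ x) * (S2 *m v) j 0 + 4 * lam^+2 * bf Sigma v x * (S2 *m x) j 0
        + 2 * lam^+2 * a_ x * (Sigma *m v) j 0 + 4 * lam^+2 * bf S2 v x * (Sigma *m x) j 0)
  + h * ((4 * lam^+2 * bf Sigma v x * (S2 *m v) j 0 + 2 * lam^+2 * qf Sigma v * (S2 *m x) j 0
        + 4 * lam^+2 * bf S2 v x * (Sigma *m v) j 0 + 2 * lam^+2 * qf S2 v * (Sigma *m x) j 0)
  + h * ((2 * lam^+2 * qf Sigma v * (S2 *m v) j 0 + 2 * lam^+2 * qf S2 v * (Sigma *m v) j 0)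
  + h * 0))).
Proof.
rewrite !gvE !mulmx_shift !qf_shift //; last exact: S2sym.
ring.
Qed.

Definition Hm (x : 'cV[R]_d) : 'M[R]_d :=
  (- 4 * lam + 2 * lam^+2 * b_ x) *: S2 + (2 * lam^+2 * a_ x) *: Sigma
  + (4 * lam^+2) *: ((Sigma *m x) *m (S2 *m x)^T + (S2 *m x) *m (Sigma *m x)^T).

Lemma hess_f x : hessian f x = (Hm x)^T.
Proof.
apply/matrixP => i j.
have Epj : partial j f = fun y => gv y j 0.
  by apply/funext => y; exact: partial_f.
rewrite [LHS]mxE Epj /partial (derive_cubic (fun h => Gj_shift h (e_ i) x j)) !bf_e.
rewrite !Me [RHS]mxE /Hm !addE !scaleE addE !outer_entry.
ring.
Qed.

End F.
Arguments gv {R d}.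
Arguments Hm {R d}.
Arguments grad_f {R d lam Sigma}.
Arguments hess_f {R d lam Sigma}.
Arguments f_shift {R d lam Sigma}.

Section E.
Variables (R : realType) (d : nat) (lam : R) (Sigma : 'M[R]_d)
  (sigma : 'I_d -> R) (u : 'I_d -> 'cV[R]_d).
Hypothesis Hlam : 0 < lam.
Hypothesis HS : Sigma^T = Sigma.
Hypothesis Hdist : forall i j : 'I_d, (i < j)%N -> sigma j < sigma i.
Hypothesis Hsig : forall i : 'I_d, 0 < sigma i.
Hypothesis Heig : forall i : 'I_d, Sigma *m u i = sigma i *: u i.
Hypothesis Hnorm : forall i : 'I_d, ((u i)^T *m u i) 0 0 = 1.
Local Notation S2 := (Sigma *m Sigma).
Local Notation f := (R_soft lam Sigma).

Definition c i (x : 'cV[R]_d) : R := ((u i)^T *m x) 0 0.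

Lemma uTS i : (u i)^T *m Sigma = sigma i *: (u i)^T.
Proof. by rewrite -{1}HS -trmx_mul Heig linearZ. Qed.

Lemma c_comb i k1 k2 y z : c i (k1 *: y + k2 *: z) = k1 * c i y + k2 * c i z.
Proof.
by rewrite /c mulmxDr -!scalemxAr [LHS]mxE [X in X + _ = _]mxE [X in _ + X = _]mxE.
Qed.

Lemma c_scale i k y : c i (k *: y) = k * c i y.
Proof. by rewrite /c -scalemxAr mxE. Qed.

Lemma c0 i : c i 0 = 0.
Proof. by rewrite /c mulmx0 mxE. Qed.

Lemma cS i x : c i (Sigma *m x) = sigma i * c i x.
Proof. by rewrite /c mulmxA uTS -scalemxAl mxE. Qed.

Lemma cS2 i x : c i (S2 *m x) = sigma i ^+ 2 * c i x.
Proof. by rewrite -mulmxA !cS mulrA expr2. Qed.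

Lemma S2u i : S2 *m u i = sigma i ^+ 2 *: u i.
Proof. by rewrite -mulmxA Heig -scalemxAr Heig scalerA expr2. Qed.

Lemma sig_neq i j : i != j -> sigma i != sigma j.
Proof.
rewrite neq_ltn => /orP [] /Hdist H.
  by rewrite gt_eqF.
by rewrite lt_eqF.
Qed.

Lemma cu i j : c i (u j) = (i == j)%:R.
Proof.
case: eqVneq => [<-|ne]; first exact: Hnorm.
have : sigma i * c i (u j) = sigma j * c i (u j) by rewrite -cS Heig c_scale.
move/eqP; rewrite -subr_eq0 -mulrBl mulf_eq0 subr_eq0 (negPf (sig_neq i j ne)) /=.
by move/eqP.
Qed.

Definition U : 'M[R]_d := \matrix_(k, i) u i k 0.

Lemma Utx i x l : (U^T *m x) i l = c i x.
Proof. rewrite (ord1 l) /c !mxE; apply: eq_bigr => m _; by rewrite !mxE. Qed.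

Lemma UtU : U^T *m U = 1%:M.
Proof.
apply/matrixP => i j.
have -> : (U^T *m U) i j = (U^T *m u j) i 0.
  by rewrite !mxE; apply: eq_bigr => m _; rewrite !mxE.
by rewrite Utx cu mxE.
Qed.

Lemma UUt : U *m U^T = 1%:M.
Proof. exact: mulmx1C UtU. Qed.

Lemma decomp x : x = \sum_i c i x *: u i.
Proof.
apply/matrixP => k l; rewrite (ord1 l).
rewrite -[x in LHS]mul1mx -UUt -mulmxA [LHS]mxE summxE.
apply: eq_bigr => i _; rewrite [RHS]mxE mulrC [U k i]mxE; congr (_ * _); exact: Utx.
Qed.

Lemma dot y z : (y^T *m z) 0 0 = \sum_i c i y * c i z.
Proof.
have -> : y^T *m z = (U^T *m y)^T *m (U^T *m z).
  by rewrite trmx_mul trmxK mulmxA -(mulmxA y^T) UUt mulmx1.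
rewrite mxE; apply: eq_bigr => i _; rewrite mxE; congr (_ * _); exact: Utx.
Qed.

Lemma qfS x : qf Sigma x = \sum_i sigma i * c i x ^+ 2.
Proof.
by rewrite /qf -mulmxA dot; apply: eq_bigr => i _; rewrite cS; ring.
Qed.

Lemma qfS2 x : qf S2 x = \sum_i sigma i ^+ 2 * c i x ^+ 2.
Proof.
by rewrite /qf -mulmxA dot; apply: eq_bigr => i _; rewrite cS2; ring.
Qed.

Lemma eq0_coord x : (forall i, c i x = 0) -> x = 0.
Proof.
by move=> H; rewrite (decomp x) big1 // => i _; rewrite H scale0r.
Qed.


Lemma qf0 M : qf M (0 : 'cV[R]_d) = 0.
Proof. by rewrite /qf mulmx0 mxE. Qed.

Lemma qf_su M s j : qf M (s *: u j) = s ^+ 2 * qf M (u j).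
Proof.
rewrite /qf -scalemxAr scaleE [(s *: u j)^T]linearZ /= -!scalemxAl scaleE; ring.
Qed.

Lemma qfS_u j : qf Sigma (u j) = sigma j.
Proof. by rewrite /qf -mulmxA Heig -scalemxAr scaleE Hnorm mulr1. Qed.

Lemma qfS2_u j : qf S2 (u j) = sigma j ^+ 2.
Proof. by rewrite /qf -mulmxA S2u -scalemxAr scaleE Hnorm mulr1. Qed.

Lemma Su s j : Sigma *m (s *: u j) = (s * sigma j) *: u j.
Proof. by rewrite -scalemxAr Heig scalerA. Qed.

Lemma S2su s j : S2 *m (s *: u j) = (s * sigma j ^+ 2) *: u j.
Proof. by rewrite -scalemxAr S2u scalerA. Qed.

Lemma tu a j k : ((a *: u j)^T *m u k) 0 0 = a * (j == k)%:R.
Proof. by rewrite [(a *: u j)^T]linearZ /= -scalemxAl scaleE; congr (_ * _); exact: cu. Qed.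

Lemma outer_mul (y z w : 'cV[R]_d) : y *m z^T *m w = ((z^T *m w) 0 0) *: y.
Proof. by rewrite -mulmxA {1}(mx11_scalar (z^T *m w)) mul_mx_scalar. Qed.

Lemma s_neq0 s j : lam * sigma j * s ^+ 2 = 1 -> s != 0.
Proof. by move=> H; apply/eqP => s0; move: H; rewrite s0 expr0n /= mulr0 => /eqP; rewrite eq_sym oner_eq0. Qed.

Lemma lamE s j : lam * sigma j * s ^+ 2 = 1 -> lam = (sigma j * s ^+ 2)^-1.
Proof.
move=> H; have sn := @s_neq0 s j H; have sj : sigma j != 0 by rewrite gt_eqF.
apply: (@mulIf _ (sigma j * s ^+ 2)); first by rewrite mulf_neq0 // expf_neq0.
by rewrite mulVf ?mulf_neq0 ?expf_neq0 // mulrA.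
Qed.

Lemma gv_su s j : lam * sigma j * s ^+ 2 = 1 -> gv lam Sigma (s *: u j) = 0.
Proof.
move=> H; have sn := @s_neq0 s j H; have sj : sigma j != 0 by rewrite gt_eqF.
rewrite /gv S2su Su qf_su qfS_u qf_su qfS2_u !scalerA -scalerDl.
rewrite (@lamE s j H).
have -> : (-4 * (sigma j * s ^+ 2)^-1 + 2 * (sigma j * s ^+ 2)^-1 ^+ 2 * (s ^+ 2 * sigma j)) * (s * sigma j ^+ 2) +
  2 * (sigma j * s ^+ 2)^-1 ^+ 2 * (s ^+ 2 * sigma j ^+ 2) * (s * sigma j) = 0.
  by field; rewrite ?sn ?sj.
by rewrite scale0r.
Qed.

Lemma Hm_eig0 k : Hm lam Sigma 0 *m u k = (-4 * lam * sigma k ^+ 2) *: u k.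
Proof.
rewrite /Hm !mulmx0 !qf0 mul0mx addr0 scaler0 addr0 !mulr0 scale0r addr0 addr0.
by rewrite -scalemxAl S2u scalerA.
Qed.

Lemma Hm_eig s j k : lam * sigma j * s ^+ 2 = 1 ->
  Hm lam Sigma (s *: u j) *m u k =
  (2 * lam * sigma k * (sigma j - sigma k) + (k == j)%:R * (8 * lam * sigma j ^+ 2)) *: u k.
Proof.
move=> H; have sn := @s_neq0 s j H; have sj : sigma j != 0 by rewrite gt_eqF.
rewrite /Hm Su S2su qf_su qfS_u qf_su qfS2_u !mulmxDl -!scalemxAl !mulmxDl -!scalemxAl !outer_mul !tu S2u Heig.
rewrite (@lamE s j H).
case: (eqVneq k j) => [->|kj].
  rewrite !scalerA -!scalerDl !scalerA -!scalerDl; congr (_ *: _).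
  by field; rewrite ?sn ?sj.
have kj' : (j == k) = false by rewrite eq_sym (negPf kj).
rewrite ?(negPf kj) ?kj' !mulr0 !scale0r !scaler0 !addr0 !scalerA -!scalerDl ?mul0r ?addr0 ?scaler0 ?addr0.
congr (_ *: _).
by field; rewrite ?sn ?sj.
Qed.

Lemma eig_unit (H : 'M[R]_d) (h : 'I_d -> R) :
  (forall k, H *m u k = h k *: u k) -> (forall k, h k != 0) -> H \in unitmx.
Proof.
move=> Hh hn.
have HU : H *m U = U *m diag_mx (\row_k h k).
  apply/matrixP => r k; rewrite mul_mx_diag [RHS]mxE [X in _ = _ * X]mxE.
  have -> : (H *m U) r k = (H *m u k) r 0.
    by rewrite !mxE; apply: eq_bigr => l _; rewrite !mxE.
  by rewrite Hh scaleE [U r k]mxE mulrC.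
have DD : diag_mx (\row_k h k) *m diag_mx (\row_k (h k)^-1) = 1%:M.
  rewrite mulmx_diag; apply/matrixP => r k; rewrite !mxE.
  by case: (eqVneq r k) => [->|] //=; rewrite mulfV.
have : H *m (U *m diag_mx (\row_k (h k)^-1) *m U^T) = 1%:M.
  by rewrite !mulmxA HU -(mulmxA U) DD mulmx1 UUt.
by case/mulmx1_unit.
Qed.


Lemma gv0 : gv lam Sigma 0 = 0.
Proof. by rewrite /gv !mulmx0 !scaler0 addr0. Qed.

Lemma qfS2_gt0 y j : c j y != 0 -> 0 < qf S2 y.
Proof.
move=> cj; rewrite qfS2 (bigD1 j) //=.
apply: ltr_wpDr.
  by apply: sumr_ge0 => i _; rewrite mulr_ge0 ?sqr_ge0.
by rewrite mulr_gt0 // exprn_even_gt0 //= ?cj ?orbT // gt_eqF.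
Qed.

Lemma c_gv i mu : c i (gv lam Sigma mu) =
  c i mu * sigma i * ((- 4 * lam + 2 * lam ^+ 2 * qf Sigma mu) * sigma i + 2 * lam ^+ 2 * qf S2 mu).
Proof. rewrite /gv c_comb cS2 cS; ring. Qed.

Lemma crit_fwd mu : gv lam Sigma mu = 0 ->
  mu = 0 \/ exists j s, lam * sigma j * s ^+ 2 = 1 /\ mu = s *: u j.
Proof.
move=> G.
have Hc i : c i mu * sigma i * ((- 4 * lam + 2 * lam ^+ 2 * qf Sigma mu) * sigma i
   + 2 * lam ^+ 2 * qf S2 mu) = 0 by rewrite -c_gv G c0.
case: (boolP [exists j, c j mu != 0]); last first.
  move/existsPn => H; left; apply: eq0_coord => i.
  by apply/eqP; move: (H i); rewrite negbK.
move/existsP => [j cj]; right.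
set B := - 4 * lam + 2 * lam ^+ 2 * qf Sigma mu.
set A := qf S2 mu.
have sj : sigma j != 0 by rewrite gt_eqF.
have Kj : B * sigma j + 2 * lam ^+ 2 * A = 0.
  by move: (Hc j); rewrite -/B -/A => /eqP; rewrite !mulf_eq0 (negPf cj) (negPf sj) /= => /eqP.
have Apos : 0 < A by exact: qfS2_gt0 cj.
have others : forall i, i != j -> c i mu = 0.
  move=> i ij; apply/eqP; apply: contraT => ci.
  have si : sigma i != 0 by rewrite gt_eqF.
  have Ki : B * sigma i + 2 * lam ^+ 2 * A = 0.
    by move: (Hc i); rewrite -/B -/A => /eqP; rewrite !mulf_eq0 (negPf ci) (negPf si) /= => /eqP.
  have : (sigma i - sigma j) * B = 0 by rewrite mulrBl; lra.
  move/eqP; rewrite mulf_eq0 subr_eq0 (negPf (sig_neq i j ij)) /= => /eqP B0.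
  have : 0 < 2 * lam ^+ 2 * A by rewrite !mulr_gt0 // exprn_gt0.
  by rewrite B0 mul0r add0r in Kj; rewrite Kj ltxx.
have mu_eq : mu = c j mu *: u j.
  rewrite {1}(decomp mu) (bigD1 j) //= big1 ?addr0 // => i ij.
  by rewrite others // scale0r.
have [s mu_eq'] : exists s, mu = s *: u j by exists (c j mu).
exists j, s; split => //.
rewrite /B /A mu_eq' !qf_su qfS_u qfS2_u in Kj.
have : 4 * lam * sigma j * (lam * sigma j * s ^+ 2 - 1) = 0.
  by rewrite -Kj; ring.
move/eqP; rewrite !mulf_eq0 (negPf sj) (gt_eqF Hlam) pnatr_eq0 /= subr_eq0.
by move/eqP.
Qed.


Lemma Hm_unit0 : Hm lam Sigma 0 \in unitmx.
Proof.
apply: (@eig_unit _ (fun k => -4 * lam * sigma k ^+ 2)) => k; first exact: Hm_eig0.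
have n4 : (-4 : R) != 0 by rewrite oppr_eq0 pnatr_eq0.
by rewrite !mulf_neq0 // ?expf_neq0 // gt_eqF.
Qed.

Lemma Hm_unit s j : lam * sigma j * s ^+ 2 = 1 -> Hm lam Sigma (s *: u j) \in unitmx.
Proof.
move=> H.
apply: (@eig_unit _ (fun k => 2 * lam * sigma k * (sigma j - sigma k) + (k == j)%:R * (8 * lam * sigma j ^+ 2))) => k.
  exact: Hm_eig.
case: (eqVneq k j) => [->|kj].
  by rewrite subrr mulr0 add0r mul1r !mulf_neq0 ?expf_neq0 ?gt_eqF ?pnatr_eq0.
rewrite mul0r addr0; apply: mulf_neq0; first by rewrite !mulf_neq0 ?pnatr_eq0 ?gt_eqF.
by rewrite subr_eq0 (sig_neq j k) // eq_sym.
Qed.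

Lemma nondeg x : gv lam Sigma x = 0 -> hessian f x \in unitmx.
Proof.
move=> G; rewrite (hess_f HS) unitmx_tr.
case: (@crit_fwd x G) => [->|[j [s [H ->]]]]; first exact: Hm_unit0.
exact: Hm_unit H.
Qed.

Lemma bf_u M i y : bf M (u i) y = c i (M *m y).
Proof. by rewrite /bf -mulmxA. Qed.

Lemma cc i : c i y @[y --> (0 : 'cV[R]_d)] --> 0.
Proof.
have E : (fun y => c i y) = (fun y => \sum_m (u i)^T 0 m * y m 0).
  by apply/funext => y; rewrite /c mxE.
rewrite E.
have T : \sum_m (u i)^T 0 m * (0 : 'cV[R]_d) m 0 = 0.
  by rewrite big1 // => m _; rewrite !mxE mulr0.
rewrite -[X in _ --> X]T.
apply: (@cvg_big R _ +%R 0 xpredT add_continuous _ (nbhs (0:'cV[R]_d))).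
move=> m _; apply: cvgM; first exact: cvg_cst.
exact: coord_continuous.
Qed.

Lemma locmax : strict_local_max f 0.
Proof.
have cb : qf Sigma y @[y --> (0 : 'cV[R]_d)] --> 0.
  have E : (fun y => qf Sigma y) = (fun y => \sum_i sigma i * (c i y * c i y)).
    by apply/funext => y; rewrite qfS; apply: eq_bigr => i _; rewrite expr2.
  rewrite E.
  have T : \sum_i sigma i * ((0:R) * 0) = 0 by rewrite big1 // => i _; rewrite !mulr0.
  rewrite -[X in _ --> X]T.
  apply: (@cvg_big R _ +%R 0 xpredT add_continuous _ (nbhs (0:'cV[R]_d))).
  move=> i _; apply: cvgM; first exact: cvg_cst.
  by apply: cvgM; exact: cc.
have il : 0 < lam^-1 by rewrite invr_gt0.
have Hlt := @cvgr_lt R _ _ _ _ _ cb _ il.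
rewrite /strict_local_max; near=> y => yn.
have hb : qf Sigma y < lam^-1 by near: y; exact: Hlt.
have [j cj] : exists j, c j y != 0.
  case: (boolP [exists j, c j y != 0]) => [/existsP //|/existsPn H].
  exfalso; move/eqP: yn; apply; apply: eq0_coord => i; apply/eqP.
  by move: (H i); rewrite negbK.
have ha := @qfS2_gt0 y j cj.
have lb : lam * qf Sigma y < 1 by rewrite -ltr_pdivlMl // mulr1.
have la : 0 < lam * qf S2 y by rewrite mulr_gt0.
rewrite /R_soft !qf0.
nra.
Unshelve. all: by end_near.
Qed.

Lemma gmin s j : lam * sigma j * s ^+ 2 = 1 -> (forall i, sigma i <= sigma j) ->
  global_min f (s *: u j).
Proof.
move=> H Hmax y.
have sn := @s_neq0 s j H; have sj : sigma j != 0 by rewrite gt_eqF.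
have fx : f (s *: u j) = \tr Sigma - sigma j.
  rewrite /R_soft !qf_su qfS_u qfS2_u (@lamE s j H); field; by rewrite ?sn ?sj.
rewrite fx /R_soft.
set a := qf S2 y; set b := qf Sigma y.
have a0 : 0 <= a by rewrite /a qfS2; apply: sumr_ge0 => i _; rewrite mulr_ge0 ?sqr_ge0.
have ab : a <= sigma j * b.
  rewrite /a /b qfS2 qfS mulr_sumr; apply: ler_sum => i _.
  have := Hmax i; have := Hsig i; have := sqr_ge0 (c i y); nra.
have sj0 := Hsig j.
have key : 0 <= sigma j * (- 2 * lam * a + lam ^+ 2 * (b * a) + sigma j).
  have -> : sigma j * (- 2 * lam * a + lam ^+ 2 * (b * a) + sigma j) =
    (lam * a - sigma j) ^+ 2 + lam ^+ 2 * a * (sigma j * b - a) by ring.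
  apply: addr_ge0; first exact: sqr_ge0.
  apply: mulr_ge0; last by rewrite subr_ge0.
  by apply: mulr_ge0 => //; exact: sqr_ge0.
rewrite pmulr_rge0 // in key.
lra.
Qed.


Lemma saddle s j i0 : lam * sigma j * s ^+ 2 = 1 -> i0 != j -> sigma j < sigma i0 ->
  strict_saddle f (s *: u j).
Proof.
move=> H ij lt.
have sn := @s_neq0 s j H; have sj : sigma j != 0 by rewrite gt_eqF.
have si0 := Hsig i0.
split.
- by rewrite /critical_point (grad_f HS) (@gv_su s j H).
- exists (2 * lam * sigma i0 * (sigma j - sigma i0)); split.
    by rewrite pmulr_rlt0 ?subr_lt0 // !mulr_gt0.
  apply/eigenvalueP; exists (u i0)^T.
    rewrite (hess_f HS) -trmx_mul (@Hm_eig s j i0 H) (negPf ij) mul0r addr0.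
    by rewrite linearZ.
  apply/eqP => u0; move: (Hnorm i0); rewrite u0 mul0mx mxE => /eqP.
  by rewrite eq_sym oner_eq0.
- move=> Hmin.
  set x := s *: u j.
  set Q1 := lam * sigma i0 * (sigma j - sigma i0).
  set Q3 := lam ^+ 2 * (sigma i0 * sigma i0 ^+ 2).
  have bz2 : bf S2 (u i0) x = 0 by rewrite bf_u cS2 c_scale cu (negPf ij) !mulr0.
  have bz : bf Sigma (u i0) x = 0 by rewrite bf_u cS c_scale cu (negPf ij) !mulr0.
  have Ef : forall h, f (h *: u i0 + x) - f x = h * h * (Q1 + h * h * Q3).
    move=> h; rewrite (f_shift HS) bz2 bz qfS_u qfS2_u /x !qf_su qfS_u qfS2_u /Q1 /Q3 (@lamE s j H).
    by field; rewrite ?sn ?sj.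
  have Q1neg : Q1 < 0 by rewrite /Q1 pmulr_rlt0 ?subr_lt0 // mulr_gt0.
  have Q3pos : 0 < Q3 by rewrite /Q3 !mulr_gt0 // exprn_gt0.
  have Hc : (fun h : R => h *: u i0 + x) @ 0 --> x.
    suff : (fun h : R => h *: u i0 + x) @ 0 --> 0 *: u i0 + x by rewrite scale0r add0r.
    apply: cvgD; last exact: cvg_cst.
    apply: cvgZr_tmp; exact: cvg_id.
  have H1 : \forall h \near (0:R), f x <= f (h *: u i0 + x) by exact: (Hc _ Hmin).
  have Hq0 : (fun h : R => h * h * Q3) @ 0 --> 0.
    have T : (0:R) * 0 * Q3 = 0 by rewrite !mul0r.
    rewrite -[X in _ --> X]T.
    apply: cvgM; last exact: cvg_cst.
    by apply: cvgM; exact: cvg_id.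
  have nQ1 : 0 < - Q1 by rewrite oppr_gt0.
  have Hq := @cvgr_lt R _ _ _ _ _ Hq0 _ nQ1.
  have : \forall h \near (0:R)^', False.
    near=> h.
    have hn : h != 0 by near: h; exact: (@nbhs_dnbhs_neq R 0).
    have h1 : f x <= f (h *: u i0 + x) by near: h; apply: (@nbhs_dnbhs R 0); exact: H1.
    have h2 : h * h * Q3 < - Q1 by near: h; apply: (@nbhs_dnbhs R 0); exact: Hq.
    have E := Ef h.
    have hh : 0 < h * h by rewrite -expr2 exprn_even_gt0 //= hn.
    nra.
  by move=> Fa; have [] := filter_ex Fa.
Unshelve. all: by end_near.
Qed.


Local Notation p j := ((Num.sqrt (lam * sigma j))^-1 *: u j).

Lemma main_sec :
  (forall mu, critical_point f mu -> nondegenerate_crit f mu) /\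
  (forall mu, critical_point f mu <->
     (mu = 0 \/ exists j : 'I_d, mu = p j \/ mu = - p j)) /\
  strict_local_max f 0 /\
  (forall j : 'I_d, (0 < j)%N -> strict_saddle f (p j) /\ strict_saddle f (- p j)) /\
  (forall j : 'I_d, nat_of_ord j = 0%N -> global_min f (p j) /\ global_min f (- p j)).
Proof.
have ls j : 0 < lam * sigma j by rewrite mulr_gt0.
have rok j : lam * sigma j * ((Num.sqrt (lam * sigma j))^-1) ^+ 2 = 1.
  by rewrite exprVn sqr_sqrtr ?ltW // mulfV // gt_eqF.
have rNok j : lam * sigma j * (- (Num.sqrt (lam * sigma j))^-1) ^+ 2 = 1.
  by rewrite sqrrN.
have crit mu : critical_point f mu <-> gv lam Sigma mu = 0.
  by rewrite /critical_point (grad_f HS).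
split.
  move=> mu /crit G; split; first exact/crit.
  exact: nondeg.
split.
  move=> mu; rewrite crit; split.
    move/crit_fwd => [->|[j [s [H ->]]]]; first by left.
    right; exists j.
    have : s ^+ 2 = ((Num.sqrt (lam * sigma j))^-1) ^+ 2.
      by apply: (@mulfI _ (lam * sigma j)); rewrite ?gt_eqF // H rok.
    move/eqP; rewrite eqf_sqr => /orP [/eqP->|/eqP->]; first by left.
    by right; rewrite scaleNr.
  case => [->|[j [->|->]]]; first exact: gv0.
    exact: gv_su (rok j).
  rewrite -scaleNr; exact: gv_su (rNok j).
split; first exact: locmax.
split.
  move=> j j0.
  pose i0 : 'I_d := Ordinal (ltn_trans j0 (ltn_ord j)).
  have ij : i0 != j by rewrite -val_eqE /= eq_sym -lt0n.
  have lt : sigma j < sigma i0 by apply: Hdist.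
  split; first exact: saddle (rok j) ij lt.
  rewrite -scaleNr; exact: saddle (rNok j) ij lt.
move=> j j0.
have Hmax i : sigma i <= sigma j.
  case: (eqVneq i j) => [->//|ij]; apply: ltW; apply: Hdist.
  rewrite j0 lt0n; apply: contra ij => /eqP i0; apply/eqP/val_inj.
  by rewrite /= i0 j0.
split; first exact: gmin (rok j) Hmax.
rewrite -scaleNr; exact: gmin (rNok j) Hmax.
Qed.

End E.

Local Close Scope classical_set_scope.

Theorem proposition1 (R : realType) (d : nat) (lam : R) (Sigma : 'M[R]_d)
  (sigma : 'I_d -> R) (u : 'I_d -> 'cV[R]_d) :
  0 < lam ->
  Sigma^T = Sigma ->
  (forall x : 'cV[R]_d, x != 0 -> 0 < qf Sigma x) ->
  (forall i j : 'I_d, (i < j)%N -> sigma j < sigma i) ->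
  (forall i : 'I_d, 0 < sigma i) ->
  (forall i : 'I_d, Sigma *m u i = sigma i *: u i) ->
  (forall i : 'I_d, ((u i)^T *m u i) 0 0 = 1) ->
  let f := R_soft lam Sigma in
  let p := fun j : 'I_d => (Num.sqrt (lam * sigma j))^-1 *: u j in
  (forall mu, critical_point f mu -> nondegenerate_crit f mu) /\
  (forall mu, critical_point f mu <->
     (mu = 0 \/ exists j : 'I_d, mu = p j \/ mu = - p j)) /\
  strict_local_max f 0 /\
  (forall j : 'I_d, (0 < j)%N -> strict_saddle f (p j) /\ strict_saddle f (- p j)) /\
  (forall j : 'I_d, nat_of_ord j = 0%N -> global_min f (p j) /\ global_min f (- p j)).
Proof.
move=> Hlam HS _ Hdist Hsig Heig Hnorm /=.
exact: main_sec.
Qed.
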